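(* Let $L$ be a $3$-dimensional $\mathbb{Z}_p$-Lie lattice such that $[L,L]$ has rank $1$. Then $L$ is not self-similar of index $p$.
   Context: $p$ is any prime. A $\mathbb{Z}_p$-Lie lattice is a $\mathbb{Z}_p$-Lie algebra whose underlying module is finitely generated and free; dimension means rank. A virtual endomorphism of $L$ is a homomorphism of algebras $\varphi:M\to L$ with $M\subseteq L$ a finite-index subalgebra, of index $[L:M]$. An ideal $I$ of $L$ is $\varphi$-invariant if it lies in the domain of every power of $\varphi$ and $\varphi(I)\subseteq I$; $\varphi$ is simple if no non-zero ideal is $\varphi$-invariant. $L$ is self-similar of index $p^k$ if it has a simple virtual endomorphism of index $p^k$. *)

(* Defs.v *)
From HB Require Import structures.
From mathcomp Require Import all_boot all_order all_algebra.
From mathcomp Require Import boolp.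
Set Implicit Arguments. Unset Strict Implicit. Unset Printing Implicit Defensive.
Import Order.TTheory GRing.Theory Num.Theory.
Local Open Scope ring_scope.

(* The ring Z_p of p-adic integers, as the inverse limit of the Z/p^nZ:     *)
(* a p-adic integer is a compatible sequence (x_n)_n of residues,            *)
(* x_n in [0, p^n), with x_{n+1} = x_n mod p^n.                              *)

Definition pmod (p n : nat) : int := (p ^ n)%N%:Z.

Record padic (p : nat) := Padic {
  pval : nat -> int ;
  pvalP : forall n, modz (pval n.+1) (pmod p n) = pval n }.

Lemma modz_mulmod (x a b : int) : modz (modz x (a * b)) a = modz x a.
Proof.
by rewrite [in RHS](divz_eq x (a * b)) mulrA mulrAC modzMDl.
Qed.

Lemma pmodS p n : pmod p n.+1 = pmod p n * p%:Z.
Proof. by rewrite /pmod expnSr PoszM. Qed.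

Section Padic.
Variable p : nat.
Local Notation Zp := (padic p).

Lemma pval_red (x : Zp) n : modz (pval x n) (pmod p n) = pval x n.
Proof. by rewrite -(pvalP x n) modz_mod. Qed.

Lemma padic_inj (x y : Zp) : (forall n, pval x n = pval y n) -> x = y.
Proof.
case: x => f fP; case: y => g gP /= efg.
have e : f = g by apply: funext.
subst g; congr Padic; exact: Prop_irrelevance.
Qed.

Lemma pred_compat (F : nat -> int) :
  (forall n, (F n.+1 = F n %[mod pmod p n])%Z) ->
  forall n, modz (modz (F n.+1) (pmod p n.+1)) (pmod p n) = modz (F n) (pmod p n).
Proof. by move=> FP n; rewrite pmodS modz_mulmod FP. Qed.

Definition padic_of (F : nat -> int)
  (FP : forall n, (F n.+1 = F n %[mod pmod p n])%Z) : Zp :=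
  @Padic p (fun n => modz (F n) (pmod p n)) (pred_compat FP).

Lemma padic_ofE F FP n : pval (@padic_of F FP) n = modz (F n) (pmod p n).
Proof. by []. Qed.

Lemma zero_compat n : ((0 : int) = 0 %[mod pmod p n])%Z. Proof. by []. Qed.
Lemma one_compat n : ((1 : int) = 1 %[mod pmod p n])%Z. Proof. by []. Qed.
Lemma opp_compat (x : Zp) n : (- pval x n.+1 = - pval x n %[mod pmod p n])%Z.
Proof. by rewrite -modzNm pvalP. Qed.
Lemma add_compat (x y : Zp) n :
  (pval x n.+1 + pval y n.+1 = pval x n + pval y n %[mod pmod p n])%Z.
Proof. by rewrite -modzDm !pvalP. Qed.
Lemma mul_compat (x y : Zp) n :
  (pval x n.+1 * pval y n.+1 = pval x n * pval y n %[mod pmod p n])%Z.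
Proof. by rewrite -modzMm !pvalP. Qed.

Definition pzero : Zp := padic_of zero_compat.
Definition pone : Zp := padic_of one_compat.
Definition popp (x : Zp) : Zp := padic_of (opp_compat x).
Definition padd (x y : Zp) : Zp := padic_of (add_compat x y).
Definition pmul (x y : Zp) : Zp := padic_of (mul_compat x y).

Lemma paddA : associative padd.
Proof.
move=> x y z; apply: padic_inj => n; rewrite !padic_ofE.
by rewrite modzDml modzDmr addrA.
Qed.
Lemma paddC : commutative padd.
Proof. by move=> x y; apply: padic_inj => n; rewrite !padic_ofE addrC. Qed.
Lemma padd0 : left_id pzero padd.
Proof. by move=> x; apply: padic_inj => n; rewrite !padic_ofE modzDml add0r pval_red. Qed.
Lemma paddN : left_inverse pzero popp padd.
Proof.
by move=> x; apply: padic_inj => n; rewrite !padic_ofE modzDml addNr mod0z.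
Qed.
Lemma pmulA : associative pmul.
Proof.
move=> x y z; apply: padic_inj => n; rewrite !padic_ofE.
by rewrite modzMml modzMmr mulrA.
Qed.
Lemma pmulC : commutative pmul.
Proof. by move=> x y; apply: padic_inj => n; rewrite !padic_ofE mulrC. Qed.
Lemma pmul1 : left_id pone pmul.
Proof.
by move=> x; apply: padic_inj => n; rewrite !padic_ofE modzMml mul1r pval_red.
Qed.
Lemma pmulDl : left_distributive pmul padd.
Proof.
move=> x y z; apply: padic_inj => n; rewrite !padic_ofE.
by rewrite modzMml modzDm mulrDl.
Qed.

End Padic.

HB.instance Definition _ p := gen_eqMixin (padic p).
HB.instance Definition _ p := gen_choiceMixin (padic p).
HB.instance Definition _ p :=
  GRing.isZmodule.Build (padic p) (@paddA p) (@paddC p) (@padd0 p) (@paddN p).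
HB.instance Definition _ p :=
  GRing.Zmodule_isComPzRing.Build (padic p) (@pmulA p) (@pmulC p) (@pmul1 p)
    (@pmulDl p).


Section LieLattices.
Variables (R : comPzRingType) (V : lmodType R) (br : V -> V -> V).

Definition is_Lie_bracket : Prop :=
  [/\ (forall a x y z, br (a *: x + y) z = a *: br x z + br y z),
      (forall a x y z, br x (a *: y + z) = a *: br x y + br x z),
      (forall x, br x x = 0) &
      (forall x y z, br x (br y z) + br y (br z x) + br z (br x y) = 0)].

Definition free_of_rank (S : V -> Prop) (n : nat) : Prop :=
  exists b : 'I_n -> V,
    [/\ (forall i, S (b i)),
        (forall c : 'I_n -> R, \sum_i c i *: b i = 0 -> forall i, c i = 0) &
        (forall x, S x -> exists c : 'I_n -> R, x = \sum_i c i *: b i)].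

Definition Lie_lattice (n : nat) : Prop :=
  is_Lie_bracket /\ free_of_rank (fun _ => True) n.

Definition derived (x : V) : Prop :=
  exists n (a : 'I_n -> R) (u v : 'I_n -> V), x = \sum_i a i *: br (u i) (v i).

Definition submodule (S : V -> Prop) : Prop :=
  [/\ S 0, (forall x y, S x -> S y -> S (x + y)) &
      (forall a x, S x -> S (a *: x))].

Definition subalgebra (M : V -> Prop) : Prop :=
  submodule M /\ (forall x y, M x -> M y -> M (br x y)).

Definition ideal (I : V -> Prop) : Prop :=
  submodule I /\ (forall x y, I x -> I (br x y)).

(* M has index k in V, i.e. the additive quotient group V/M has exactly
   k elements: there are k pairwise incongruent representatives mod M
   covering all cosets *)
Definition has_index (M : V -> Prop) (k : nat) : Prop :=
  exists s : k.-tuple V,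
    (forall i j : 'I_k, i != j -> ~ M (tnth s i - tnth s j)) /\
    (forall x, exists i : 'I_k, M (x - tnth s i)).

(* phi : M -> L is a homomorphism of Lie algebras (phi is given as a total
   function on V, only its values on M matter) *)
Definition Lie_hom_on (M : V -> Prop) (phi : V -> V) : Prop :=
  [/\ (forall x y, M x -> M y -> phi (x + y) = phi x + phi y),
      (forall a x, M x -> phi (a *: x) = a *: phi x) &
      (forall x y, M x -> M y -> phi (br x y) = br (phi x) (phi y))].

Definition virtual_endo (M : V -> Prop) (phi : V -> V) (k : nat) : Prop :=
  [/\ subalgebra M, has_index M k & Lie_hom_on M phi].

Definition dom_pow (M : V -> Prop) (phi : V -> V) (k : nat) (x : V) : Prop :=
  forall j, (j < k)%N -> M (iter j phi x).

Definition phi_invariant (M : V -> Prop) (phi : V -> V) (I : V -> Prop) :=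
  (forall k x, I x -> dom_pow M phi k x) /\ (forall x, I x -> I (phi x)).

Definition simple_virtual_endo (M : V -> Prop) (phi : V -> V) : Prop :=
  forall I, ideal I -> phi_invariant M phi I -> forall x, I x -> x = 0.

Definition self_similar (k : nat) : Prop :=
  exists (M : V -> Prop) (phi : V -> V),
    virtual_endo M phi k /\ simple_virtual_endo M phi.

End LieLattices.

(* Main.v *)
Require Import Defs.
From HB Require Import structures.
From mathcomp Require Import all_boot all_order all_algebra ring.
Set Implicit Arguments. Unset Strict Implicit. Unset Printing Implicit Defensive.
Import Order.TTheory GRing.Theory Num.Theory.
Local Open Scope ring_scope.

Section ZpFacts.
Variable p : nat.
Hypothesis p_prime : prime p.
Local Notation R := (padic p).

Lemma pvalM (x y : R) n : pval (x * y) n = modz (pval x n * pval y n) (pmod p n).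
Proof. by []. Qed.
Lemma pvalD (x y : R) n : pval (x + y) n = modz (pval x n + pval y n) (pmod p n).
Proof. by []. Qed.
Lemma pval1 n : pval (1 : R) n = modz 1 (pmod p n).
Proof. by []. Qed.
Lemma pval0 n : pval (0 : R) n = modz 0 (pmod p n).
Proof. by []. Qed.

Lemma pvaln (k : nat) n : pval (k%:R : R) n = modz k%:Z (pmod p n).
Proof.
elim: k => [|k IH]; first by rewrite pval0.
by rewrite mulrS pvalD IH pval1 modzDm intS.
Qed.

Lemma pmodD k d : pmod p (k + d) = pmod p k * pmod p d.
Proof. by rewrite /pmod expnD PoszM. Qed.

Lemma pval_red_le (x : R) k N : (k <= N)%N -> modz (pval x N) (pmod p k) = pval x k.
Proof.
move=> le; rewrite -(subnKC le); elim: (N - k)%N => [|d IH]; first by rewrite addn0 pval_red.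
rewrite -IH. rewrite -(pvalP x (k + d)). rewrite addnS. by rewrite pmodD modz_mulmod.
Qed.

Lemma p_gt1 : (1 < p)%N. Proof. exact: prime_gt1. Qed.

Lemma padic_one_neq0 : (1 : R) != 0.
Proof.
apply/eqP => /(congr1 (fun x => pval x 1)); rewrite pval1 pval0 mod0z.
rewrite modz_small // /pmod expn1; apply/andP; split => //.
by rewrite ltz_nat p_gt1.
Qed.

Lemma modz_pmod0 (m : int) k : (modz m (pmod p k) == 0) = (p ^ k %| `|m|)%N.
Proof.
apply/eqP/idP => [/dvdz_mod0P | H]; first by rewrite /dvdz /pmod absz_nat.
by apply/dvdz_mod0P; rewrite /dvdz /pmod absz_nat.
Qed.

Lemma padic_neq0 (x : R) : x != 0 -> exists n, pval x n != 0.
Proof.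
move=> nx; apply: boolp.contrapT => H; move/eqP: nx; apply; apply: padic_inj => n.
rewrite pval0 mod0z; apply/eqP/negPn/negP => h; apply: H; by exists n.
Qed.

Lemma padic_val (x : R) : x != 0 ->
  exists a, forall N, (a < N)%N -> 
    let X := `|pval x N|%N in (0 < X)%N /\ logn p X = a.
Proof.
move=> /padic_neq0 exn.
case: (ex_minnP exn) => n0 Hn0 Hmin.
have n0pos : (0 < n0)%N.
  by case: n0 Hn0 {Hmin} => // ; rewrite -[pval x 0]pval_red /pmod expn0 modz1.
exists n0.-1 => N ltN X.
have hN : (n0 <= N)%N by rewrite -(prednK n0pos).
have HnotD : ~~ (p ^ n0 %| X)%N.
  by rewrite -modz_pmod0 pval_red_le.
have Xpos : (0 < X)%N.
  by rewrite lt0n; apply: contra HnotD => /eqP ->; rewrite dvdn0.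
have HD : (p ^ n0.-1 %| X)%N.
  rewrite -modz_pmod0 pval_red_le; last exact: leq_trans (leq_pred _) hN.
  case E: (pval x n0.-1 == 0) => //.
  by have := Hmin _ (negbT E); rewrite -{1}(prednK n0pos) ltnn.
split => //.
move: HnotD HD; rewrite !pfactor_dvdn // => h1 h2.
by apply/eqP; rewrite eqn_leq h2 andbT -ltnS (prednK n0pos) ltnNge.
Qed.

Lemma padic_domain (x y : R) : x * y = 0 -> x = 0 \/ y = 0.
Proof.
move=> xy0; case: (eqVneq x 0) => [-> | nx]; first by left.
case: (eqVneq y 0) => [-> | ny]; first by right.
exfalso.
have [a Ha] := padic_val nx; have [b Hb] := padic_val ny.
set N := (a + b).+1.
have [Xp lX] := Ha N (leq_ltn_trans (leq_addr b a) (ltnSn _)).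
have [Yp lY] := Hb N (leq_ltn_trans (leq_addl a b) (ltnSn _)).
have := pvalM x y N; rewrite xy0 pval0 mod0z => /esym/eqP.
rewrite modz_pmod0 abszM pfactor_dvdn ?muln_gt0 ?Xp // lognM // lX lY.
by rewrite /N ltnn.
Qed.

Lemma padic_p_neq0 : (p%:R : R) != 0.
Proof.
apply/eqP => /(congr1 (fun x => pval x 2)); rewrite pvaln pval0 mod0z.
rewrite modz_small; first by move/eqP; rewrite eqz_nat; case: p p_gt1.
rewrite lez_nat /= /pmod ltz_nat expnS ltn_Pmulr // ?expn_gt0 ?expn1 ?p_gt1 //.
by rewrite ltnW // p_gt1.
Qed.

Lemma small_unit (d : nat) : (0 < d < p)%N -> exists r : R, r * d%:R = 1.
Proof.
case/andP => d0 dp.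
have cop n : gcdz d%:Z (pmod p n) = 1.
  apply/eqP; rewrite -/(coprimez _ _) coprimezE /pmod !absz_nat.
  by apply: coprimeXr; rewrite coprime_sym prime_coprime // gtnNdvd.
pose e n := projT1 (Bezoutz d%:Z (pmod p n)).
have eP n : (e n * d%:Z = 1 %[mod pmod p n])%Z.
  rewrite /e; case: (Bezoutz _ _) => u [v /= huv].
  by rewrite -(cop n) -huv addrC modzMDl.
have compat n : (e n.+1 = e n %[mod pmod p n])%Z.
  have h1 : (e n.+1 * d%:Z = 1 %[mod pmod p n])%Z.
    by rewrite -(modz_mulmod _ (pmod p n) p%:Z) -pmodS eP pmodS modz_mulmod.
  rewrite -[e n.+1]mulr1 -modzMmr -(eP n) modzMmr mulrCA.
  by rewrite -modzMmr h1 modzMmr mulr1.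
exists (padic_of compat); apply: padic_inj => n.
by rewrite pvalM padic_ofE pvaln modzMml modzMmr eP.
Qed.

End ZpFacts.

Section LieFacts.
Variable p : nat.
Hypothesis p_prime : prime p.
Local Notation R := (padic p).
Variable V : lmodType R.
Variable br : V -> V -> V.
Hypothesis HB : is_Lie_bracket br.
Variable e : 'I_3 -> V.
Hypothesis eindep : forall c : 'I_3 -> R, \sum_i c i *: e i = 0 -> forall i, c i = 0.
Hypothesis espan : forall x, exists c : 'I_3 -> R, x = \sum_i c i *: e i.
Variable w : V.
Hypothesis wder : derived br w.
Hypothesis windep : forall c : 'I_1 -> R, \sum_i c i *: w = 0 -> forall i, c i = 0.
Hypothesis wspan : forall x, derived br x -> exists c : 'I_1 -> R, x = \sum_i c i *: w.

Lemma brLl a x y z : br (a *: x + y) z = a *: br x z + br y z.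
Proof. by case: HB. Qed.
Lemma brLr a x y z : br x (a *: y + z) = a *: br x y + br x z.
Proof. by case: HB. Qed.
Lemma brxx x : br x x = 0.
Proof. by case: HB. Qed.
Lemma brJ x y z : br x (br y z) + br y (br z x) + br z (br x y) = 0.
Proof. by case: HB. Qed.

Lemma br0l z : br 0 z = 0.
Proof.
have := brLl 1 0 0 z; rewrite scaler0 addr0 scale1r.
by rewrite -{1}[br 0 z]addr0 => /addrI <-.
Qed.
Lemma br0r z : br z 0 = 0.
Proof.
have := brLr 1 z 0 0; rewrite scaler0 addr0 scale1r.
by rewrite -{1}[br z 0]addr0 => /addrI <-.
Qed.
Lemma brDl x y z : br (x + y) z = br x z + br y z.
Proof. by have := brLl 1 x y z; rewrite !scale1r. Qed.
Lemma brDr x y z : br z (x + y) = br z x + br z y.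
Proof. by have := brLr 1 z x y; rewrite !scale1r. Qed.
Lemma brZl a x z : br (a *: x) z = a *: br x z.
Proof. by rewrite -[a *: x]addr0 brLl br0l addr0. Qed.
Lemma brZr a x z : br z (a *: x) = a *: br z x.
Proof. by rewrite -[a *: x]addr0 brLr br0r addr0. Qed.
Lemma brA x y : br y x = - br x y.
Proof.
apply/eqP; rewrite -addr_eq0; have := brxx (x + y).
by rewrite brDl !brDr !brxx add0r addr0 addrC => ->.
Qed.
Lemma brNl x z : br (- x) z = - br x z.
Proof. by rewrite -scaleN1r brZl scaleN1r. Qed.
Lemma brNr x z : br z (- x) = - br z x.
Proof. by rewrite -scaleN1r brZr scaleN1r. Qed.
Lemma brBl x y z : br (x - y) z = br x z - br y z.
Proof. by rewrite brDl brNl. Qed.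
Lemma brBr x y z : br z (x - y) = br z x - br z y.
Proof. by rewrite brDr brNr. Qed.
Lemma brsuml n (F : 'I_n -> V) y : br (\sum_i F i) y = \sum_i br (F i) y.
Proof. by apply: (big_morph (br^~ y)); [move=> a b; rewrite brDl | rewrite br0l]. Qed.
Lemma brsumr n (F : 'I_n -> V) y : br y (\sum_i F i) = \sum_i br y (F i).
Proof. by apply: (big_morph (br y)); [move=> a b; rewrite brDr | rewrite br0r]. Qed.

Lemma padic_expn_neq0 n : (p%:R : R) ^+ n != 0.
Proof.
elim: n => [|n IH]; first by rewrite expr0 (padic_one_neq0 p_prime).
rewrite exprS; apply/eqP => /(padic_domain p_prime) [] /eqP; first by rewrite (negPf (padic_p_neq0 p_prime)).
by rewrite (negPf IH).
Qed.

Lemma w_uniq c d : c *: w = d *: w -> c = d.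
Proof.
move=> /eqP; rewrite -subr_eq0 -scalerBl => /eqP h.
have := @windep (fun _ => c - d); rewrite big_ord1 => /(_ h ord0) /eqP.
by rewrite subr_eq0 => /eqP.
Qed.

Lemma w_neq0 : w != 0.
Proof.
apply/eqP => w0; have := @w_uniq 1 0; rewrite w0 !scaler0 => /(_ erefl) /eqP.
by rewrite (negPf (padic_one_neq0 p_prime)).
Qed.

Lemma in_Rw x : derived br x -> exists c, x = c *: w.
Proof. by move=> /wspan [c ->]; exists (c ord0); rewrite big_ord1. Qed.

Lemma br_Rw x y : exists c, br x y = c *: w.
Proof.
apply: in_Rw; exists 1%N, (fun _ => 1), (fun _ => x), (fun _ => y).
by rewrite big_ord1 scale1r.
Qed.

Definition B x y := proj1_sig (boolp.cid (br_Rw x y)).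
Lemma BP x y : br x y = B x y *: w.
Proof. exact: (proj2_sig (boolp.cid (br_Rw x y))). Qed.
Definition alpha y := B y w.
Lemma alphaP y : br y w = alpha y *: w.
Proof. exact: BP. Qed.
Lemma alphaZ a y : alpha (a *: y) = a * alpha y.
Proof. by apply: w_uniq; rewrite -alphaP brZl alphaP scalerA. Qed.

Lemma torsion (a : R) (v : V) : a *: v = 0 -> v != 0 -> a = 0.
Proof.
move=> av vn; have [c vc] := espan v.
have : \sum_i (a * c i) *: e i = 0.
  transitivity (a *: v); last exact: av.
  by rewrite vc scaler_sumr; apply: eq_bigr => i _; rewrite scalerA.
move/eindep => h.
case: (boolp.pselect (exists i, c i != 0)) => [[i ci]|H].
  by case: (padic_domain p_prime (h i)) => // ci0; rewrite ci0 eqxx in ci.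
case/eqP: vn; rewrite vc big1 // => i _.
have -> : c i = 0 by apply/eqP/negPn/negP => ci; apply: H; exists i.
by rewrite scale0r.
Qed.

Lemma torsion_p n (v : V) : (p%:R : R) ^+ n *: v = 0 -> v = 0.
Proof.
move=> h; apply/eqP/negPn/negP => vn.
by have := torsion h vn; apply/eqP; exact: padic_expn_neq0.
Qed.

Definition Wp (x : V) := exists n c, (p%:R : R) ^+ n *: x = c *: w.
Definition Cen (x : V) := forall y, br x y = 0.

Lemma Wp_br (y v : V) : Wp v -> br y v = alpha y *: v.
Proof.
case=> n [c hv]; apply/eqP; rewrite -subr_eq0; apply/eqP.
have h : (p%:R : R) ^+ n *: br y v = (p%:R : R) ^+ n *: (alpha y *: v).
  rewrite -brZr hv brZr alphaP scalerA mulrC -scalerA -hv.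
  by rewrite scalerA mulrC -scalerA.
by apply: (@torsion_p n); rewrite scalerBr h subrr.
Qed.


Definition i0 : 'I_3 := @Ordinal 3 0 isT.
Definition i1 : 'I_3 := @Ordinal 3 1 isT.
Definition i2 : 'I_3 := @Ordinal 3 2 isT.
Lemma ord3 (k : 'I_3) : k = i0 \/ k = i1 \/ k = i2.
Proof.
case: k => [[|[|[|//]]] H].
- by left; apply: val_inj.
- by right; left; apply: val_inj.
- by right; right; apply: val_inj.
Qed.
Lemma sum3 (F : 'I_3 -> V) : \sum_i F i = F i0 + F i1 + F i2.
Proof.
rewrite !big_ord_recr big_ord0 /= GRing.add0r.
by congr (F _ + F _ + F _); apply: val_inj.
Qed.

Lemma Bxx x : B x x = 0.
Proof. by apply: w_uniq; rewrite -BP brxx scale0r. Qed.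
Lemma BA x y : B y x = - B x y.
Proof. by apply: w_uniq; rewrite -BP brA BP scaleNr. Qed.

Definition zc := B (e i1) (e i2) *: e i0 + B (e i2) (e i0) *: e i1 + B (e i0) (e i1) *: e i2.

Lemma zc_cen : Cen zc.
Proof.
move=> y; have [d ->] := espan y; rewrite brsumr big1 // => k _; rewrite brZr.
suff -> : br zc (e k) = 0 by rewrite scaler0.
rewrite /zc !brDl !brZl !BP !scalerA -!scalerDl.
suff -> : B (e i1) (e i2) * B (e i0) (e k) + B (e i2) (e i0) * B (e i1) (e k) +
  B (e i0) (e i1) * B (e i2) (e k) = 0 by rewrite scale0r.
case: (ord3 k) => [->|[->|->]].
- by rewrite Bxx (BA (e i0) (e i1)) mulr0 add0r mulrN [X in _ + X]mulrC addNr.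
- by rewrite Bxx (BA (e i1) (e i2)) mulr0 addr0 mulrN [X in X + _]mulrC addrN.
- by rewrite Bxx (BA (e i2) (e i0)) mulr0 addr0 mulrN [X in _ + X]mulrC addNr.
Qed.

Lemma zc_neq0 : zc != 0.
Proof.
apply/eqP => z0.
pose c k := if k == i0 then B (e i1) (e i2) else if k == i1 then B (e i2) (e i0)
  else B (e i0) (e i1).
have hc : \sum_i c i *: e i = 0 by rewrite sum3 -z0.
have b12 := @eindep c hc i0; have b20 := @eindep c hc i1; have b01 := @eindep c hc i2.
rewrite /c /= in b12 b20 b01.
have Be : forall i j, B (e i) (e j) = 0.
  move=> k l; have [->|[->|->]] := ord3 k; have [->|[->|->]] := ord3 l;
  first [ by rewrite Bxx | by [] | by rewrite BA ?b12 ?b20 ?b01 oppr0 ].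
have br0 : forall x y, br x y = 0.
  move=> x y; have [d ->] := espan x; have [d' ->] := espan y.
  rewrite brsuml big1 // => i _; rewrite brZl brsumr big1 ?scaler0 // => j _.
  by rewrite brZr BP Be scale0r scaler0.
case: wder => n [a [u [v wE]]].
by move: w_neq0; rewrite wE big1 ?eqxx // => i _; rewrite br0 scaler0.
Qed.


Section VE.
Variables (M : V -> Prop) (phi : V -> V).
Hypotheses (HM : subalgebra br M) (Hidx : has_index M p) (Hphi : Lie_hom_on br M phi).
Hypothesis (Hsimp : simple_virtual_endo br M phi).

Lemma M0 : M 0. Proof. by move: HM => [[]]. Qed.
Lemma MD x y : M x -> M y -> M (x + y). Proof. by move: HM => [[_ h _] _]; apply: h. Qed.
Lemma MZ a x : M x -> M (a *: x). Proof. by move: HM => [[_ _ h] _]; apply: h. Qed.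
Lemma MN x : M x -> M (- x). Proof. by move=> Mx; rewrite -scaleN1r; apply: MZ. Qed.
Lemma MB x y : M x -> M y -> M (x - y). Proof. by move=> Mx My; apply: MD => //; apply: MN. Qed.
Lemma Mbr x y : M x -> M y -> M (br x y). Proof. by move: HM => [_ h]; apply: h. Qed.
Lemma phiD x y : M x -> M y -> phi (x + y) = phi x + phi y. Proof. by move: Hphi => [h _ _]; apply: h. Qed.
Lemma phiZ a x : M x -> phi (a *: x) = a *: phi x. Proof. by move: Hphi => [_ h _]; apply: h. Qed.
Lemma phibr x y : M x -> M y -> phi (br x y) = br (phi x) (phi y). Proof. by move: Hphi => [_ _ h]; apply: h. Qed.
Lemma phi0 : phi 0 = 0.
Proof. by have := phiZ 0 M0; rewrite !scale0r. Qed.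

Lemma no_inv (I : V -> Prop) : ideal br I -> (forall x, I x -> M x) ->
  (forall x, I x -> I (phi x)) -> forall x, I x -> x = 0.
Proof.
move=> HI IM Iphi; apply: Hsimp => //; split => // k x Ix j _; apply: IM.
by elim: j => // j IH; rewrite iterS; apply: Iphi.
Qed.

Lemma Munit d x : (0 < d < p)%N -> M (d%:R *: x) -> M x.
Proof.
move=> /(small_unit p_prime) [r hr] Mdx.
by have := MZ r Mdx; rewrite scalerA hr scale1r.
Qed.

Lemma Mcover x : ~ M x -> forall y, exists k, (k < p)%N /\ M (y - k%:R *: x).
Proof.
move=> nMx; case: Hidx => s [Hdist Hcov].
pose f (k : 'I_p) := proj1_sig (boolp.cid (Hcov (k%:R *: x))).
have fP (k : 'I_p) : M (k%:R *: x - tnth s (f k)) := proj2_sig (boolp.cid (Hcov (k%:R *: x))).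
have key : forall k l : 'I_p, (k < l)%N -> f k = f l -> False.
  move=> k l kl fkl; apply: nMx; apply: (@Munit (l - k)%N).
    by rewrite subn_gt0 kl (leq_ltn_trans (leq_subr k l) (ltn_ord l)).
  have := MB (fP l) (fP k); rewrite fkl.
  by rewrite (natrB _ (ltnW kl)) scalerBl opprB addrA subrK.
have finj : injective f.
  move=> k l fkl; case: (ltngtP k l) => [kl|lk|/val_inj //].
  - by case: (key _ _ kl fkl).
  - by case: (key _ _ lk (esym fkl)).
move=> y; case: (Hcov y) => i hi.
have /codomP [k ik] := injF_onto finj i; rewrite ik in hi.
exists k; split => //.
have := MB hi (fP k).
by rewrite opprB addrA subrK.
Qed.

Lemma MpL x : M (p%:R *: x).
Proof.
case: (boolp.pselect (M x)) => Mx; first exact: MZ.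
have [k [kp hk]] := Mcover Mx (p%:R *: x).
case: k kp hk => [|k] kp hk; first by move: hk; rewrite scale0r subr0.
case: Mx; apply: (@Munit (p - k.+1)%N).
  by rewrite subn_gt0 kp /= ltn_subrL /= (leq_ltn_trans _ kp).
by move: hk; rewrite -scalerBl (natrB _ (ltnW kp)).
Qed.

Lemma span_in n (a : 'I_n -> R) (u v : 'I_n -> V) :
  (forall i, exists m1 m2, [/\ M m1, M m2 & br (u i) (v i) = br m1 m2]) ->
  M (\sum_i a i *: br (u i) (v i)) /\ exists c, phi (\sum_i a i *: br (u i) (v i)) = c *: w.
Proof.
elim: n a u v => [|n IH] a u v H.
  by rewrite big_ord0; split; [exact: M0 | exists 0; rewrite phi0 scale0r].
rewrite big_ord_recr /=.
have [MS [c hc]] := IH (fun i => a (widen_ord (leqnSn n) i)) (fun i => u (widen_ord (leqnSn n) i))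
   (fun i => v (widen_ord (leqnSn n) i)) (fun i => H _).
have [m1 [m2 [Mm1 Mm2 ->]]] := H ord_max.
have Mb : M (a ord_max *: br m1 m2) by apply: MZ; apply: Mbr.
split; first exact: MD.
have Mb' : M (br m1 m2) by apply: Mbr.
rewrite phiD // hc phiZ // phibr // BP scalerA -scalerDl.
by eexists.
Qed.


Definition Rw (x : V) := exists c, x = c *: w.

Lemma ideal_Rw : ideal br Rw.
Proof.
split; first split.
- by exists 0; rewrite scale0r.
- by move=> x y [c ->] [d ->]; exists (c + d); rewrite scalerDl.
- by move=> a x [c ->]; exists (a * c); rewrite scalerA.
- by move=> x y [c ->]; exists (c * B w y); rewrite brZl BP scalerA.
Qed.

Lemma caseB c0 : Cen c0 -> ~ M c0 -> False.
Proof.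
move=> Cc nM.
have c0r : forall y, br y c0 = 0 by move=> y; rewrite brA Cc oppr0.
case: wder => n [a [u [v wE]]].
have H : forall i, exists m1 m2, [/\ M m1, M m2 & br (u i) (v i) = br m1 m2].
  move=> i; have [k [_ hk]] := Mcover nM (u i); have [l [_ hl]] := Mcover nM (v i).
  exists (u i - k%:R *: c0), (v i - l%:R *: c0); split => //.
  by rewrite brBl !brBr !brZl !brZr !Cc !c0r !scaler0 !subr0.
have [Mw [c hc]] := span_in a H; rewrite -wE in Mw hc.
have := @no_inv Rw ideal_Rw _ _ w.
move=> /(_ _ _ (ex_intro _ 1 (esym (scale1r w)))) h; move: w_neq0; rewrite h ?eqxx //.
- by move=> x [d ->]; apply: MZ.
- by move=> x [d ->]; rewrite phiZ // hc scalerA; eexists.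
Qed.

Lemma Wp_Z a x : Wp x -> Wp (a *: x).
Proof.
case=> n [c hx]; exists n, (a * c).
by rewrite scalerA (mulrC _ a) -scalerA -scalerA hx.
Qed.

Lemma ideal_Wp : ideal br Wp.
Proof.
split; first split.
- by exists 0%N, 0; rewrite scaler0 scale0r.
- move=> x y [n [c hx]] [m [d hy]]; exists (n + m)%N, ((p%:R : R) ^+ m * c + (p%:R : R) ^+ n * d).
  have e1 : ((p%:R : R) ^+ n * (p%:R : R) ^+ m) *: x = (p%:R : R) ^+ m *: (c *: w).
    by rewrite (mulrC ((p%:R : R) ^+ n)) -scalerA hx.
  have e2 : ((p%:R : R) ^+ n * (p%:R : R) ^+ m) *: y = (p%:R : R) ^+ n *: (d *: w).
    by rewrite -scalerA hy.
  by rewrite exprD scalerDr e1 e2 !scalerA scalerDl.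
- by move=> a x; apply: Wp_Z.
- move=> x y [n [c hx]]; exists n, (c * B w y).
  by rewrite -brZl hx brZl BP scalerA.
Qed.

Lemma phiW x : Wp x -> M x -> Wp (phi x).
Proof.
move=> [n [c hx]] Mx.
case: wder => k [a [u [v wE]]].
have H : forall i, exists m1 m2, [/\ M m1, M m2 &
   br ((p%:R : R) *: u i) ((p%:R : R) *: v i) = br m1 m2].
  by move=> i; exists ((p%:R : R) *: u i), ((p%:R : R) *: v i); split => //; apply: MpL.
have [MS [d hd]] := span_in a H.
have ES : \sum_i a i *: br ((p%:R : R) *: u i) ((p%:R : R) *: v i) = ((p%:R : R) * p%:R) *: w.
  rewrite wE scaler_sumr; apply: eq_bigr => i _.
  by rewrite brZl brZr !scalerA; congr (_ *: _); ring.
rewrite ES in MS hd.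
exists (n + 2)%N, (c * d).
have eqx : (p%:R : R) ^+ (n + 2) *: x = c *: (((p%:R : R) * p%:R) *: w).
  transitivity (((p%:R : R) * p%:R) *: ((p%:R : R) ^+ n *: x)).
    by rewrite scalerA exprD expr2; congr (_ *: _); ring.
  by rewrite hx !scalerA; congr (_ *: _); ring.
by rewrite -phiZ // eqx phiZ // hd scalerA.
Qed.

Lemma caseA : (forall x, Wp x -> M x) -> False.
Proof.
move=> WM.
have h := @no_inv Wp ideal_Wp WM (fun x Wx => phiW Wx (WM x Wx)) w.
have Ww : Wp w by exists 0%N, 1; rewrite expr0 !scale1r.
by move: w_neq0; rewrite h ?eqxx.
Qed.

Lemma caseC u : (forall x, Cen x -> M x) -> Wp u -> ~ M u -> False.
Proof.
move=> CM Wu nMu.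
set q := (p%:R : R) *: u.
have Mq : M q := MpL u.
have Wq : Wp q := Wp_Z _ Wu.
have un0 : u != 0 by apply/eqP => u0; apply: nMu; rewrite u0; exact: M0.
have qn0 : q != 0.
  apply/eqP => q0; move/eqP: un0; apply; apply: (@torsion_p 1); by rewrite expr1.
case: (eqVneq (phi q) 0) => [phiq0 | phiqn0].
  pose I x := exists c, x = c *: q.
  have HI : ideal br I.
    split; first split.
    - by exists 0; rewrite scale0r.
    - by move=> x y [c ->] [d ->]; exists (c + d); rewrite scalerDl.
    - by move=> a x [c ->]; exists (a * c); rewrite scalerA.
    - move=> x y [c ->]; exists (- (c * alpha y)).
      by rewrite brZl brA (Wp_br y Wq) scalerN scalerA scaleNr.
  have := @no_inv I HI _ _ q.
  move=> /(_ _ _ (ex_intro _ 1 (esym (scale1r q)))) h; move: qn0; rewrite h ?eqxx //.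
  - by move=> x [d ->]; apply: MZ.
  - by move=> x [d ->]; rewrite phiZ // phiq0 scaler0; exists 0; rewrite scale0r.
have Wpq : Wp (phi q) := phiW Wq Mq.
have alpha_phi : forall m, M m -> alpha (phi m) = alpha m.
  move=> m Mm; have h1 := phibr Mm Mq.
  rewrite (Wp_br m Wq) (Wp_br (phi m) Wpq) phiZ // in h1.
  apply/eqP; rewrite -subr_eq0; apply/eqP; apply: (torsion _ phiqn0).
  by rewrite scalerBl h1 subrr.
have [y0 ay0] : exists y0, alpha y0 != 0.
  apply: boolp.contrapT => H; apply: nMu; apply: CM => y.
  have ay : alpha y = 0 by apply/eqP/negPn/negP => h; apply: H; exists y.
  by rewrite brA (Wp_br y Wu) ay scale0r oppr0.
set m0 := (p%:R : R) *: y0.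
have Mm0 : M m0 := MpL y0.
have am1 : alpha (phi m0) != 0.
  rewrite alpha_phi // /m0 alphaZ; apply/eqP => /(padic_domain p_prime) [].
    by apply/eqP; exact: (padic_p_neq0 p_prime).
  by apply/eqP.
have HC : ideal br Cen.
  split; first split.
  - by move=> y; rewrite br0l.
  - by move=> x y Cx Cy z; rewrite brDl Cx Cy addr0.
  - by move=> a x Cx z; rewrite brZl Cx scaler0.
  - by move=> x y Cx z; rewrite Cx br0l.
have h := @no_inv Cen HC CM _ zc zc_cen.
move: zc_neq0; rewrite h ?eqxx // => z Cz.
have Mz := CM z Cz.
have hx : forall m, M m -> br (phi z) (phi m) = 0.
  by move=> m Mm; rewrite -phibr // Cz phi0.
have ax : alpha (phi z) = 0.
  by apply: (torsion _ phiqn0); rewrite -(Wp_br _ Wpq) hx.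
move=> y; have J := brJ (phi z) y (phi m0).
rewrite (brA (phi z)) (hx m0 Mm0) oppr0 br0r addr0 (BP y) brZr alphaP ax scale0r scaler0 add0r in J.
rewrite (BP (phi z) y) brZr alphaP scalerA in J.
rewrite BP.
have : B (phi z) y * alpha (phi m0) = 0 by apply: w_uniq; rewrite J scale0r.
case/(padic_domain p_prime) => [-> | h0]; first by rewrite scale0r.
by move: am1; rewrite h0 eqxx.
Qed.

Lemma main_contra : False.
Proof.
case: (boolp.pselect (exists c0, Cen c0 /\ ~ M c0)) => [[c0 [Cc nM]] | H1].
  exact: (caseB Cc nM).
have CM : forall x, Cen x -> M x.
  by move=> x Cx; apply: boolp.contrapT => nx; apply: H1; exists x.
case: (boolp.pselect (exists u, Wp u /\ ~ M u)) => [[u [Wu nMu]] | H2].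
  exact: (caseC CM Wu nMu).
by apply: caseA => x Wx; apply: boolp.contrapT => nx; apply: H2; exists x.
Qed.

End VE.

End LieFacts.

Local Close Scope ring_scope.

Theorem proposition1p13 (p : nat) (p_prime : prime p)
  (V : lmodType (padic p)) (br : V -> V -> V) :
  Lie_lattice br 3 -> free_of_rank (derived br) 1 -> ~ self_similar br p.
Proof.
move=> [HBr [e [_ eindep espan]]] [w [wder windep wspan]] [M [phi [[HM Hidx Hphi] Hsimp]]].
have windep' : forall c : 'I_1 -> padic p, (\sum_i c i *: w ord0 = 0)%R -> forall i, c i = 0%R.
  by move=> c; rewrite big_ord1 => h; apply: windep; rewrite big_ord1.
have wspan' : forall x, derived br x -> exists c : 'I_1 -> padic p, x = (\sum_i c i *: w ord0)%R.
  by move=> x /wspan [c ->]; exists c; rewrite !big_ord1.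
exact: (main_contra p_prime HBr eindep (fun x => espan x I) (wder ord0) windep' wspan' HM Hidx Hphi Hsimp).
Qed.
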